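(* Let $G$ be a unit square graph and let $u,v\in V(G)$ be distinct non-adjacent vertices. Then $G[N(u)\cap N(v)]$ is a unit interval graph, and $N(u)\cap N(v)$ contains no independent set of size three.
   Context: A unit square graph is a graph $G$ admitting $f\colon V(G)\to\mathbb{R}^2$ with $vw\in E(G)$ iff $\|f(v)-f(w)\|_\infty\le1$ for distinct $v,w$. A unit interval graph is an intersection graph of unit-length intervals on the real line. *)

(* Defs.v *)
From Stdlib Require Import Reals FinFun.
Open Scope R_scope.

Definition simple_graph (V : Type) (adj : V -> V -> Prop) : Prop :=
  Finite V /\ (forall v w, adj v w -> adj w v) /\ (forall v, ~ adj v v).

Definition dist_inf (p q : R * R) : R :=
  Rmax (Rabs (fst p - fst q)) (Rabs (snd p - snd q)).

Definition unit_square_graph (V : Type) (adj : V -> V -> Prop) : Prop :=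
  exists f : V -> R * R,
    forall v w, v <> w -> (adj v w <-> dist_inf (f v) (f w) <= 1).

Definition nbhd (V : Type) (adj : V -> V -> Prop) (u : V) : V -> Prop :=
  fun x => adj u x.

Definition unit_intervals_meet (a b : R) : Prop :=
  exists x, a <= x <= a + 1 /\ b <= x <= b + 1.

(* The induced subgraph G[S] is a unit interval graph: intersection graph of
   unit-length (closed) intervals, one interval [g v, g v + 1] per vertex of S. *)
Definition induced_unit_interval (V : Type) (adj : V -> V -> Prop) (S : V -> Prop) : Prop :=
  exists g : V -> R,
    forall v w, S v -> S w -> v <> w -> (adj v w <-> unit_intervals_meet (g v) (g w)).

Definition has_indep3 (V : Type) (adj : V -> V -> Prop) (S : V -> Prop) : Prop :=
  exists a b c, S a /\ S b /\ S c /\ a <> b /\ a <> c /\ b <> c /\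
    ~ adj a b /\ ~ adj a c /\ ~ adj b c.

(* Main.v *)
Require Import Defs.
From Stdlib Require Import Reals FinFun Lra.
Open Scope R_scope.

Ltac kabs := unfold Rabs in *; repeat match goal with
  | |- context [Rcase_abs ?t] => destruct (Rcase_abs t)
  | H : context [Rcase_abs ?t] |- _ => destruct (Rcase_abs t)
  end; lra.

Lemma rmax_le (x y : R) : Rmax x y <= 1 <-> x <= 1 /\ y <= 1.
Proof. unfold Rmax; destruct (Rle_dec x y); split; intros; lra. Qed.

Lemma meet_iff (a b : R) : unit_intervals_meet a b <-> Rabs (a - b) <= 1.
Proof.
  split.
  - intros [x [H1 H2]]. kabs.
  - intros H. exists (Rmax a b). unfold Rmax; destruct (Rle_dec a b); kabs.
Qed.

Lemma core (V : Type) (adj : V -> V -> Prop) (loop : forall v, ~ adj v v)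
  (a b : V -> R)
  (Hf : forall w z, w <> z -> (adj w z <-> Rmax (Rabs (a w - a z)) (Rabs (b w - b z)) <= 1))
  (u v : V) (Hsep : Rabs (a u - a v) > 1) :
  induced_unit_interval V adj (fun x => nbhd V adj u x /\ nbhd V adj v x) /\
  ~ has_indep3 V adj (fun x => nbhd V adj u x /\ nbhd V adj v x).
Proof.
  assert (Hn : forall x y, adj x y -> Rabs (a x - a y) <= 1 /\ Rabs (b x - b y) <= 1).
  { intros x y H. assert (x <> y) by (intro; subst; apply (loop y); auto).
    apply rmax_le, Hf; auto. }
  assert (Hc : forall w z, adj u w -> adj v w -> adj u z -> adj v z -> Rabs (a w - a z) < 1).
  { intros w z H1 H2 H3 H4. apply Hn in H1, H2, H3, H4.
    destruct H1, H2, H3, H4. kabs. }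
  split.
  - exists b. intros w z [Hw1 Hw2] [Hz1 Hz2] Hwz. unfold nbhd in *.
    rewrite meet_iff, Hf by auto. rewrite rmax_le.
    pose proof (Hc w z Hw1 Hw2 Hz1 Hz2). split; [tauto | intros; split; lra].
  - intros [x [y [z [[X1 X2] [[Y1 Y2] [[Z1 Z2] [Dxy [Dxz [Dyz [Axy [Axz Ayz]]]]]]]]]]].
    unfold nbhd in *.
    rewrite Hf, rmax_le in Axy, Axz, Ayz by auto.
    pose proof (Hc x y X1 X2 Y1 Y2). pose proof (Hc x z X1 X2 Z1 Z2).
    pose proof (Hc y z Y1 Y2 Z1 Z2).
    assert (Bxy : Rabs (b x - b y) > 1) by (apply Rnot_le_gt; intro; apply Axy; split; lra).
    assert (Bxz : Rabs (b x - b z) > 1) by (apply Rnot_le_gt; intro; apply Axz; split; lra).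
    assert (Byz : Rabs (b y - b z) > 1) by (apply Rnot_le_gt; intro; apply Ayz; split; lra).
    destruct (Hn _ _ X1) as [_ P1]. destruct (Hn _ _ Y1) as [_ P2].
    destruct (Hn _ _ Z1) as [_ P3].
    clear - Bxy Bxz Byz P1 P2 P3. kabs.
Qed.

Theorem mainTheorem6 (V : Type) (adj : V -> V -> Prop)
  (HG : simple_graph V adj) (Hus : unit_square_graph V adj)
  (u v : V) (Huv : u <> v) (Hna : ~ adj u v) :
  induced_unit_interval V adj (fun x => nbhd V adj u x /\ nbhd V adj v x) /\
  ~ has_indep3 V adj (fun x => nbhd V adj u x /\ nbhd V adj v x).
Proof.
  destruct HG as [_ [_ loop]]. destruct Hus as [f Hf].
  unfold dist_inf in Hf.
  assert (Hd : ~ Rmax (Rabs (fst (f u) - fst (f v))) (Rabs (snd (f u) - snd (f v))) <= 1)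
    by (rewrite <- Hf; auto).
  rewrite rmax_le in Hd.
  destruct (Rle_dec (Rabs (fst (f u) - fst (f v))) 1) as [H1 | H1].
  - apply (core V adj loop (fun x => snd (f x)) (fun x => fst (f x))); [|lra].
    intros w z Hwz. rewrite Hf by auto. rewrite Rmax_comm. tauto.
  - apply (core V adj loop (fun x => fst (f x)) (fun x => snd (f x))); [|lra].
    intros w z Hwz. apply Hf; auto.
Qed.
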